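(* For every integer $n\ge 4$, $g(n,4) \ge \frac{n(n-3)}{48}$.
   Context: For integers $2\le k\le n$, let $S_n$ denote the set of permutations of $[n]=\{1,\dots,n\}$ (written as sequences), and $S_{n,k}$ the set of all sequences of $k$ distinct elements of $[n]$. A sequence $\kappa\in S_{n,k}$ is a subsequence of a permutation $\pi\in S_n$ if its elements appear in $\pi$ in the same relative order as in $\kappa$. A perfect sequence covering array ${\rm PSCA}(n,k)$ with multiplicity $\lambda$ (a positive integer) is a multiset $X$ of elements of $S_n$ such that every $\kappa\in S_{n,k}$ is a subsequence of exactly $\lambda$ elements of $X$ (counted with multiplicity). $g(n,k)$ denotes the smallest $\lambda$ for which a ${\rm PSCA}(n,k)$ with multiplicity $\lambda$ exists. *)

(* Defs.v *)
From mathcomp Require Import all_boot all_fingroup.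
Set Implicit Arguments. Unset Strict Implicit. Unset Printing Implicit Defensive.

Definition perm_seq (n : nat) (pi : 'S_n) : seq 'I_n := [seq pi i | i <- enum 'I_n].

Definition is_kseq (n k : nat) (kappa : seq 'I_n) : bool :=
  (size kappa == k) && uniq kappa.

Definition subseq_of_perm (n : nat) (kappa : seq 'I_n) (pi : 'S_n) : bool :=
  subseq kappa (perm_seq pi).

(* X (a multiset of permutations, represented as a list) is a PSCA(n,k)
   with multiplicity lam: every kappa in S_{n,k} is a subsequence of exactly
   lam elements of X, counted with multiplicity; lam is a positive integer. *)
Definition is_PSCA (n k lam : nat) (X : seq 'S_n) : Prop :=
  0 < lam /\
  forall kappa : seq 'I_n, is_kseq k kappa ->
    count (subseq_of_perm kappa) X = lam.

(* lam is an achievable multiplicity for a PSCA(n,k). g(n,k) is the least such lam. *)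
Definition PSCA_exists (n k lam : nat) : Prop := exists X : seq 'S_n, is_PSCA k lam X.

(* Main.v *)
Require Import Defs.
From mathcomp Require Import all_boot all_order all_fingroup all_algebra.
From mathcomp Require Import ring lra zify.
Set Implicit Arguments. Unset Strict Implicit. Unset Printing Implicit Defensive.
Import Order.TTheory GRing.Theory Num.Theory.

Definition E4 : seq 'I_4 :=
  [:: @Ordinal 4 0 isT; @Ordinal 4 1 isT; @Ordinal 4 2 isT; @Ordinal 4 3 isT].
Definition L4 : seq (seq 'I_4) := permutations E4.
Lemma sizeL4 : size L4 = 24. Proof. vm_compute. reflexivity. Qed.
Definition agree (ia ib ic id : 'I_4) :=
  count (fun l => subseq [:: ia; ib] l == subseq [:: ic; id] l) L4.
Lemma table : all (fun ia => all (fun ib => all (fun ic => all (fun id =>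
  (ia != ib) ==> (ic != id) ==>
  (agree ia ib ic id * 2 + 8 * ((ia == id) && (ib == ic) + (ia == id) + (ib == ic)) ==
   24 + 8 * ((ia == ic) && (ib == id) + (ia == ic) + (ib == id)))) E4) E4) E4) E4.
Proof. vm_compute. reflexivity. Qed.
Lemma mem_E4 (x : 'I_4) : x \in E4.
Proof. by case: x => [[|[|[|[|m]]]] Hm] //; apply/eqP. Qed.
Lemma table' (ia ib ic id : 'I_4) : ia != ib -> ic != id ->
  agree ia ib ic id * 2 + 8 * ((ia == id) && (ib == ic) + (ia == id) + (ib == ic)) =
   24 + 8 * ((ia == ic) && (ib == id) + (ia == ic) + (ib == id)).
Proof.
move=> h1 h2; have := table; move/allP/(_ ia (mem_E4 ia))/allP/(_ ib (mem_E4 ib)).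
move/allP/(_ ic (mem_E4 ic))/allP/(_ id (mem_E4 id)).
by rewrite h1 h2 /= => /eqP.
Qed.

Lemma perm_seq_uniq n (pi : 'S_n) : uniq (perm_seq pi).
Proof. by rewrite /perm_seq map_inj_uniq ?enum_uniq //; apply: perm_inj. Qed.
Lemma mem_perm_seq n (pi : 'S_n) x : x \in perm_seq pi.
Proof. by rewrite /perm_seq -[x](permKV pi) map_f ?mem_enum. Qed.

Lemma subseq_map_inj (T1 T2 : eqType) (f : T1 -> T2) (s1 s2 : seq T1) :
  injective f -> subseq (map f s1) (map f s2) = subseq s1 s2.
Proof.
move=> fi; apply/idP/idP; last exact: map_subseq.
case/subseqP=> m sz; rewrite -map_mask => /(inj_map fi) ->; exact: mask_subseq.
Qed.

Definition fT n (x0 : 'I_n) (T : seq 'I_n) (i : 'I_4) : 'I_n := nth x0 T i.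
Definition gT n (T : seq 'I_n) (x : 'I_n) : 'I_4 := inord (index x T).

Lemma fT_inj n x0 (T : seq 'I_n) : uniq T -> size T = 4 -> injective (fT x0 T).
Proof.
move=> uT sT i j /eqP; rewrite /fT nth_uniq ?sT // => /eqP; exact: val_inj.
Qed.

Lemma fgT n x0 (T : seq 'I_n) x : size T = 4 -> x \in T -> fT x0 T (gT T x) = x.
Proof. by move=> sT xT; rewrite /fT /gT inordK ?nth_index // -sT index_mem. Qed.

Lemma gT_eq n (T : seq 'I_n) x y : size T = 4 -> x \in T -> y \in T -> (gT T x == gT T y) = (x == y).
Proof.
move=> sT xT yT; apply/eqP/eqP=> [h|->] //.
by rewrite -(fgT x sT xT) -(fgT x sT yT) h.
Qed.

Lemma mapE4 n x0 (T : seq 'I_n) : size T = 4 -> map (fT x0 T) E4 = T.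
Proof. by case: T => [|? [|? [|? [|? []]]]]. Qed.

Lemma L4_perm n x0 (T : seq 'I_n) l : size T = 4 -> l \in L4 -> perm_eq (map (fT x0 T) l) T.
Proof.
move=> sT; rewrite /L4 mem_permutations => /(perm_map (fT x0 T)); by rewrite mapE4.
Qed.

Lemma L4_sub n x0 (T : seq 'I_n) (pi : 'S_n) l : uniq T -> size T = 4 -> l \in L4 ->
  subseq (map (fT x0 T) l) (perm_seq pi) -> map (fT x0 T) l = filter [in T] (perm_seq pi).
Proof.
move=> uT sT lL /(subseq_uniqP (perm_seq_uniq pi)) ->.
by apply: eq_filter => x; rewrite /= (perm_mem (@L4_perm _ x0 _ _ sT lL)).
Qed.

Lemma count1 n x0 (T : seq 'I_n) (pi : 'S_n) : uniq T -> size T = 4 ->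
  exists2 l0, l0 \in L4 & forall l, l \in L4 ->
     subseq (map (fT x0 T) l) (perm_seq pi) = (l == l0).
Proof.
move=> uT sT; set r := filter [in T] (perm_seq pi).
have rT : {in r, forall x, x \in T} by move=> x; rewrite mem_filter => /andP[].
have mr : map (fT x0 T) (map (gT T) r) = r.
  by rewrite -map_comp; apply: map_id_in => x /rT xT /=; rewrite fgT.
have pr : perm_eq r T.
  apply: uniq_perm; rewrite ?filter_uniq ?perm_seq_uniq // => x.
  by rewrite mem_filter mem_perm_seq andbT.
have l0L : map (gT T) r \in L4.
  rewrite /L4 mem_permutations; apply: (perm_map_inj (@fT_inj _ x0 _ uT sT)).
  by rewrite mr mapE4.
exists (map (gT T) r) => // l lL; apply/idP/eqP => [/(L4_sub uT sT lL)|->].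
  by rewrite -/r -{1}mr => /(inj_map (@fT_inj _ x0 _ uT sT)).
by rewrite mr filter_subseq.
Qed.

Definition bef n (pi : 'S_n) (a b : 'I_n) := subseq [:: a; b] (perm_seq pi).

Lemma bef_l n x0 (T : seq 'I_n) (pi : 'S_n) l a b : uniq T -> size T = 4 -> l \in L4 ->
  subseq (map (fT x0 T) l) (perm_seq pi) -> a \in T -> b \in T ->
  bef pi a b = subseq [:: gT T a; gT T b] l.
Proof.
move=> uT sT lL /(L4_sub uT sT lL) e aT bT.
rewrite -(subseq_map_inj _ _ (@fT_inj _ x0 _ uT sT)) e /= subseq_filter /= !fgT // aT bT.
by [].
Qed.

Close Scope ring_scope.
Local Open Scope ring_scope.

Definition sg (b : bool) : rat := if b then 1 else -1.

Lemma sum_count (T : Type) (P : pred T) (s : seq T) :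
  \sum_(x <- s) (P x)%:R = (count P s)%:R :> rat.
Proof. by elim: s => [|x s IH]; rewrite ?big_nil ?big_cons //= IH natrD. Qed.

Lemma sum_sg (T : Type) (P Q : pred T) s :
  \sum_(x <- s) sg (P x) * sg (Q x) =
  2 * (count (fun x => P x == Q x) s)%:R - (size s)%:R.
Proof.
elim: s => [|x s IH]; first by rewrite big_nil /= mulr0 subrr.
rewrite big_cons IH /= natrD -(addn1 (size s)) natrD.
by case: (P x); case: (Q x); rewrite /sg /=; lra.
Qed.

Definition PSCAh n (X : seq 'S_n) (lam : nat) :=
  forall kappa : seq 'I_n, is_kseq 4 kappa -> count (subseq_of_perm kappa) X = lam.

Lemma sumX n (x0 : 'I_n) (T : seq 'I_n) (X : seq 'S_n) lam : PSCAh X lam ->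
  uniq T -> size T = 4 -> forall (F : 'S_n -> rat) (G : seq 'I_4 -> rat),
  (forall pi l, l \in L4 -> subseq (map (fT x0 T) l) (perm_seq pi) -> F pi = G l) ->
  \sum_(pi <- X) F pi = lam%:R * \sum_(l <- L4) G l.
Proof.
move=> HX uT sT F G HF.
transitivity (\sum_(pi <- X) \sum_(l <- L4)
    (subseq (map (fT x0 T) l) (perm_seq pi))%:R * G l).
  apply: eq_bigr => pi _; have [l0 l0L Hl] := count1 x0 pi uT sT.
  rewrite (perm_big _ (perm_to_rem l0L)) big_cons Hl // eqxx mul1r.
  rewrite (HF pi l0) //; last by rewrite Hl.
  rewrite big1_seq; first by rewrite /= addr0.
  move=> l /andP[_ lr].
  have lL : l \in L4 by apply: (mem_rem lr).
  rewrite Hl //; have -> : (l == l0) = false.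
    apply/eqP => el; move: lr; rewrite el mem_rem_uniqF //.
  by rewrite mul0r.
rewrite exchange_big mulr_sumr big_seq [in RHS]big_seq; apply: eq_bigr => l lL.
rewrite -mulr_suml sum_count; congr (_%:R * _).
apply: HX; rewrite /is_kseq size_map.
have pl : perm_eq l E4 by rewrite -mem_permutations.
by rewrite (perm_size pl) /= map_inj_uniq ?(perm_uniq pl) //; apply: fT_inj.
Qed.

Lemma extT n (hn : (4 <= n)%N) (s : seq 'I_n) : (size s <= 4)%N ->
  exists T : seq 'I_n, [/\ uniq T, size T = 4 & {subset s <= T}].
Proof.
move=> ss.
suff H : forall k u, uniq u -> (size u + k = 4)%N ->
    exists T : seq 'I_n, [/\ uniq T, size T = 4 & {subset u <= T}].
  have [T [uT sT sub]] := H (4 - size (undup s))%N (undup s) (undup_uniq s)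
     (subnKC (leq_trans (size_undup s) ss)).
  by exists T; split => // x xs; apply: sub; rewrite mem_undup.
elim=> [|k IH] u uu su; first by rewrite addn0 in su; exists u; split.
have [x xu|allin] := pickP (fun x : 'I_n => x \notin u).
  have ux : uniq (x :: u) by rewrite /= xu uu.
  have sx : (size (x :: u) + k = 4)%N by rewrite /= addSnnS.
  have [T [uT sT sub]] := IH (x :: u) ux sx.
  by exists T; split => // y yu; apply: sub; rewrite inE yu orbT.
have : (n <= size u)%N.
  rewrite -{1}(size_enum_ord n); apply: uniq_leq_size (enum_uniq _) _ => y _.
  by apply/negPn/negbT; exact: allin.
lia.
Qed.

Definition Ecoef n (a b c d : 'I_n) : rat :=
  ((a==c)&&(b==d))%:R - ((a==d)&&(b==c))%:R + (a==c)%:R - (a==d)%:R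
  - (b==c)%:R + (b==d)%:R.

Lemma gram n (hn : (4 <= n)%N) (X : seq 'S_n) lam : PSCAh X lam ->
  forall a b c d : 'I_n, a != b -> c != d ->
  \sum_(pi <- X) sg (bef pi a b) * sg (bef pi c d) = lam%:R * (8 * Ecoef a b c d).
Proof.
move=> HX a b c d nab ncd.
have [T [uT sT sub]] := extT hn (s := [:: a; b; c; d]) isT.
have aT : a \in T by apply: sub; rewrite !inE eqxx.
have bT : b \in T by apply: sub; rewrite !inE eqxx !orbT.
have cT : c \in T by apply: sub; rewrite !inE eqxx !orbT.
have dT : d \in T by apply: sub; rewrite !inE eqxx !orbT.
rewrite (@sumX n a T X lam HX uT sT _ (fun l => sg (subseq [:: gT T a; gT T b] l) *
                                    sg (subseq [:: gT T c; gT T d] l))); last first.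
  by move=> pi l lL sl; rewrite !(bef_l uT sT lL sl).
congr (_ * _); rewrite sum_sg sizeL4.
rewrite -[count _ L4]/(agree (gT T a) (gT T b) (gT T c) (gT T d)).
have := @table' (gT T a) (gT T b) (gT T c) (gT T d).
rewrite !gT_eq // nab ncd => /(_ isT isT).
move: (agree _ _ _ _) => k.
move/(congr1 (fun k => k%:R : rat)).
rewrite !natrD !natrM /Ecoef => h.
lra.
Qed.

Close Scope ring_scope.

Definition Pset n : {set 'I_n * 'I_n} := [set x : 'I_n * 'I_n | (x.1 < x.2)%N].

Lemma cardP n : (2 * #|Pset n| + n = n * n)%N.
Proof.
have e1 : #|Pset n| = \sum_(x : 'I_n * 'I_n) ((x.1 < x.2)%N : nat).
  rewrite -sum1_card big_mkcond /=; apply: eq_bigr => x _; rewrite inE.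
  by case: ifP.
have e2 : \sum_(x : 'I_n * 'I_n) ((x.1 < x.2)%N : nat) =
          \sum_(x : 'I_n * 'I_n) ((x.2 < x.1)%N : nat).
  rewrite (reindex_inj (h := fun x : 'I_n * 'I_n => (x.2, x.1))) //=.
  by move=> [? ?] [? ?] [-> ->].
have e3 : \sum_(x : 'I_n * 'I_n) ((x.1 == x.2) : nat) = n.
  transitivity (\sum_(i < n) \sum_(j < n) ((i == j) : nat)).
    by rewrite pair_bigA.
  transitivity (\sum_(i < n) 1%N).
    apply: eq_bigr => i _; rewrite (bigD1 i) //= eqxx big1 // => j /negbTE.
    by rewrite eq_sym => ->.
  by rewrite big_const_ord iter_addn_0 mul1n.
have e4 : (n * n = \sum_(x : 'I_n * 'I_n) 1)%N.
  rewrite -[(n * n)%N]mxvec_cast -sum1_card; apply: eq_bigl => x.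
  by rewrite inE.
have e5 : \sum_(x : 'I_n * 'I_n) 1 = \sum_(x : 'I_n * 'I_n)
   (((x.1 < x.2)%N : nat) + ((x.2 < x.1)%N : nat) + ((x.1 == x.2) : nat))%N.
  apply: eq_bigr => [[i j]] _ /=.
  by rewrite -val_eqE /=; case: ltngtP.
by rewrite e4 e5 !big_split /= -e2 -e1 e3 mul2n -addnn.
Qed.

Local Open Scope ring_scope.

Lemma sq_expand (I K : finType) (w : I -> rat) (s : I -> K -> rat) :
  \sum_k (\sum_i w i * s i k) * (\sum_j w j * s j k) =
  \sum_i \sum_j w i * w j * \sum_k s i k * s j k.
Proof.
transitivity (\sum_k \sum_i \sum_j (w i * s i k) * (w j * s j k)).
  by apply: eq_bigr => k _; rewrite mulr_suml; apply: eq_bigr => i _; rewrite mulr_sumr.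
rewrite exchange_big; apply: eq_bigr => i _; rewrite exchange_big.
apply: eq_bigr => j _; rewrite mulr_sumr; apply: eq_bigr => k _; ring.
Qed.

Lemma sum_delta n (a : 'I_n) (F : 'I_n -> rat) : \sum_t (a == t)%:R * F t = F a.
Proof.
rewrite (bigD1 a) //= eqxx mul1r big1 ?addr0 // => t /negbTE.
by rewrite eq_sym => ->; rewrite mul0r.
Qed.

Definition ev n (p : 'I_n * 'I_n) (t : 'I_n) : rat := (p.1 == t)%:R - (p.2 == t)%:R.

Lemma ev_sum n (p q : 'I_n * 'I_n) :
  \sum_t ev p t * ev q t =
  (p.1 == q.1)%:R - (p.1 == q.2)%:R - (p.2 == q.1)%:R + (p.2 == q.2)%:R.
Proof.
rewrite /ev.
transitivity (\sum_t ((p.1 == t)%:R * ((q.1 == t)%:R - (q.2 == t)%:R)) -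
              \sum_t ((p.2 == t)%:R * ((q.1 == t)%:R - (q.2 == t)%:R)) : rat).
  by rewrite -sumrB; apply: eq_bigr => t _; ring.
rewrite !sum_delta (eq_sym q.1 p.1) (eq_sym q.2 p.1) (eq_sym q.1 p.2) (eq_sym q.2 p.2).
ring.
Qed.

Close Scope ring_scope.
Local Open Scope ring_scope.

Definition pr n (i : 'I_#|Pset n|) : 'I_n * 'I_n := enum_val i.

Lemma pr_lt n (i : 'I_#|Pset n|) : ((pr i).1 < (pr i).2)%N.
Proof. by have := enum_valP i; rewrite inE. Qed.

Lemma pair_eq (T1 T2 : eqType) (p q : T1 * T2) : (p == q) = (p.1 == q.1) && (p.2 == q.2).
Proof. by case: p q => [? ?] [? ?]. Qed.

Definition Amx n (X : seq 'S_n) : 'M[rat]_(#|Pset n|, size X) :=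
  \matrix_(i, k) sg (bef (nth 1%g X k) (pr i).1 (pr i).2).

Lemma keyA n (hn : (4 <= n)%N) X lam (HX : PSCAh X lam) (lp : (0 < lam)%N)
  (u : 'rV[rat]_#|Pset n|) : u *m Amx X = 0 -> u = 0.
Proof.
move=> hu.
pose w i := u 0 i.
pose s i (k : 'I_(size X)) := sg (bef (nth 1%g X k) (pr i).1 (pr i).2).
have hk : forall k, \sum_i w i * s i k = 0.
  move=> k; transitivity ((u *m Amx X) 0 k); last by rewrite hu mxE.
  by rewrite mxE; apply: eq_bigr => i _; rewrite mxE.
have Q : \sum_k (\sum_i w i * s i k) * (\sum_j w j * s j k) = 0.
  by rewrite big1 // => k _; rewrite hk mul0r.
rewrite sq_expand in Q.
pose S (i j : 'I_#|Pset n|) := \sum_(t : 'I_n) ev (pr i) t * ev (pr j) t.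
have G : forall i j, \sum_k s i k * s j k = lam%:R * (8 * ((i == j)%:R + S i j)).
  move=> i j.
  have -> : \sum_k s i k * s j k =
      \sum_(pi <- X) sg (bef pi (pr i).1 (pr i).2) * sg (bef pi (pr j).1 (pr j).2).
    by rewrite (big_nth 1%g) big_mkord.
  have ne : forall i0 : 'I_#|Pset n|, (pr i0).1 != (pr i0).2.
    by move=> i0; apply: negbT; rewrite -val_eqE; apply: ltn_eqF; exact: pr_lt.
  rewrite (gram hn HX (ne i) (ne j)) /S ev_sum /Ecoef.
  have -> : ((pr i).1 == (pr j).2) && ((pr i).2 == (pr j).1) = false.
    apply/negbTE/negP => /andP[/eqP e1 /eqP e2].
    have := pr_lt i; have := pr_lt j; rewrite e1 e2; lia.
  rewrite -pair_eq (inj_eq (@enum_val_inj _ _)) /=.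
  ring.
have Q2 : \sum_i \sum_j w i * w j * (lam%:R * (8 * ((i == j)%:R + S i j))) = 0.
  by rewrite -[X in _ = X]Q; apply: eq_bigr => i _; apply: eq_bigr => j _; rewrite G.
have E : \sum_i \sum_j w i * w j * (lam%:R * (8 * ((i == j)%:R + S i j))) =
   lam%:R * 8 * (\sum_i \sum_j w i * w j * (i==j)%:R + \sum_i \sum_j w i * w j * S i j).
  rewrite -big_split mulr_sumr; apply: eq_bigr => i _.
  rewrite -big_split mulr_sumr; apply: eq_bigr => j _ /=; ring.
have E1 : \sum_i \sum_j w i * w j * (i==j)%:R = \sum_i w i * w i.
  apply: eq_bigr => i _; rewrite -[RHS](sum_delta i (fun j => w i * w j)).
  by apply: eq_bigr => j _; rewrite mulrC.
have E2 : \sum_i \sum_j w i * w j * S i j =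
    \sum_t (\sum_i w i * ev (pr i) t) * (\sum_j w j * ev (pr j) t).
  by rewrite sq_expand.
rewrite E E1 E2 in Q2.
have l8 : lam%:R * 8 != 0 :> rat.
  by rewrite mulf_eq0 negb_or pnatr_eq0 -lt0n lp.
move: Q2 => /eqP; rewrite mulf_eq0 (negbTE l8) /= paddr_eq0; first last.
- by apply: sumr_ge0 => t _; rewrite -expr2 sqr_ge0.
- by apply: sumr_ge0 => i _; rewrite -expr2 sqr_ge0.
case/andP => /eqP h _.
apply/rowP => i; rewrite mxE.
have hge : forall i0 : 'I_#|Pset n|, xpredT i0 -> 0 <= w i0 * w i0.
  by move=> ? _; rewrite -expr2 sqr_ge0.
have := psumr_eq0P hge h (i:=i) isT.
by move/eqP; rewrite mulf_eq0 orbb => /eqP.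
Qed.

Lemma rankA n (hn : (4 <= n)%N) (X : seq 'S_n) lam (HX : PSCAh X lam) (lp : (0 < lam)%N) :
  (#|Pset n| <= size X)%N.
Proof.
have rf : row_free (Amx X).
  rewrite -kermx_eq0; apply/eqP/row_matrixP => i; rewrite row0.
  by apply: (keyA hn HX lp); rewrite -row_mul mulmx_ker row0.
by have := rank_leq_col (Amx X); rewrite (eqP rf).
Qed.

Lemma sum1seq (T : Type) (s : seq T) : \sum_(x <- s) (1 : rat) = (size s)%:R.
Proof. by elim: s => [|x s IH]; rewrite ?big_nil ?big_cons //= IH mulrS. Qed.

Close Scope ring_scope.

Theorem mainTheorem10 (n : nat) (hn : 4 <= n) (lam : nat) :
  PSCA_exists n 4 lam -> n * (n - 3) <= 48 * lam.
Proof.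
move=> [X [lp HX]].
have HX' : PSCAh X lam by [].
pose x0 : 'I_n := Ordinal (leq_trans (isT : (1 <= 4)%N) hn).
have [T [uT sT _]] := extT hn (s := [::]) isT.
have sX : size X = (24 * lam)%N.
  have := @sumX n x0 T X lam HX' uT sT (fun _ => 1%R) (fun _ => 1%R) (fun _ _ _ _ => erefl).
  rewrite !sum1seq sizeL4 -natrM => /eqP; rewrite eqr_nat => /eqP ->.
  by rewrite mulnC.
have := rankA hn HX' lp; have := cardP n; rewrite sX.
have : n * (n - 3) = n * n - 3 * n by rewrite mulnBr mulnC.
lia.
Qed.
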